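(* Let $K \subseteq L \subseteq M$ be a tower of fields of characteristic $2$ such that $L/K$ is Galois with group $\mathbb{Z}/3$ and $M/L$ is Galois with group $\mathbb{Z}/2$. Let $\sigma$ generate $\mathrm{Gal}(L/K)$. For $\ell \in L$ let $\overline{\ell}$ denote its image in $L/(F-1)L$, where $F$ is the Frobenius map $x\mapsto x^2$ (so $(F-1)L = \{x^2 - x : x \in L\}$). Suppose $M \cong L[x]/(x^2 - x - a)$ with $a \in L$, and let $d$ be the dimension of the $\mathbb{F}_2$-subspace of $L/(F-1)L$ spanned by $\overline{a}, \overline{\sigma(a)}, \overline{\sigma^2(a)}$. If $N$ is the Galois closure of $M$ over $K$, then $\mathrm{Gal}(N/K)$ is isomorphic to a semidirect product $(\mathbb{Z}/2)^d \rtimes \mathbb{Z}/3$. *)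

(* Defs.v *)
From HB Require Import structures.
From mathcomp Require Import all_boot all_order all_algebra all_fingroup all_solvable all_field.
Set Implicit Arguments. Unset Strict Implicit. Unset Printing Implicit Defensive.
Import GRing.Theory.
Local Open Scope ring_scope.

Section ArtinSchreier.
Variables (F : fieldType) (Om : fieldExtType F) (L : {subfield Om}).

Definition in_wpL (x : Om) : Prop := exists2 y, y \in L & x = y ^+ 2 - y.

(* F_2-linear combination of a finite family: sum of the members selected by c *)
Definition f2comb n (v : 'I_n -> Om) (c : 'I_n -> bool) : Om :=
  \sum_(i < n | c i) v i.

Definition in_span_modwp n (v : 'I_n -> Om) (x : Om) : Prop :=
  exists c : 'I_n -> bool, in_wpL (x - f2comb v c).

Definition indep_modwp n (v : 'I_n -> Om) : Prop :=
  forall c : 'I_n -> bool, in_wpL (f2comb v c) -> forall i, c i = false.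

(* The F_2-subspace of L/(F-1)L spanned by the classes of v (elements of L)
   has dimension d: it admits a basis of d classes (of elements of L). *)
Definition span_dim_modwp n (v : 'I_n -> Om) (d : nat) : Prop :=
  exists w : 'I_d -> Om,
    [/\ forall i, w i \in L,
        indep_modwp w,
        forall i, in_span_modwp v (w i)
      & forall j, in_span_modwp w (v j)].

End ArtinSchreier.

Definition galois_closure (F : fieldType) (Om : splittingFieldType F)
    (K M N : {subfield Om}) : Prop :=
  [/\ (M <= N)%VS, galois K N &
      forall N' : {subfield Om}, (M <= N')%VS -> galois K N' -> (N <= N')%VS].

(* Main.v *)
Require Import Defs.
From HB Require Import structures.
From mathcomp Require Import all_boot all_order all_algebra all_fingroup all_solvable all_field.
From mathcomp Require Import ring.
Import GRing.Theory.
Set Implicit Arguments. Unset Strict Implicit. Unset Printing Implicit Defensive.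
Local Open Scope ring_scope.

Lemma AS_root (R : idomainType) (h2 : 2%:R = 0 :> R) (x y : R) :
  x ^+ 2 - x = y ^+ 2 - y -> y = x \/ y = x + 1.
Proof.
move=> e.
have : (y - x) * (y - x - 1) = 0.
  have -> : (y - x) * (y - x - 1) = (y ^+ 2 - y) - (x ^+ 2 - x) + (x ^+ 2 - x * y) *+ 2.
    ring.
  by rewrite e subrr add0r -mulr_natr h2 mulr0.
move/eqP; rewrite mulf_eq0 => /orP[/eqP|/eqP] h.
  by left; apply/eqP; rewrite -subr_eq0 h.
by right; apply/eqP; rewrite -subr_eq0 opprD addrA h.
Qed.

Section Gen.
Variables (F : fieldType) (Om : fieldExtType F) (h2 : 2%:R = 0 :> Om).

Lemma addxx2 (x : Om) : x + x = 0.
Proof. by rewrite -mulr2n -mulr_natr h2 mulr0. Qed.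

Lemma opp2 (x : Om) : - x = x.
Proof. by apply/eqP; rewrite eq_sym -subr_eq0 opprK addxx2. Qed.


Lemma adjdeg_le2 (E : {subfield Om}) (g : Om) :
  g ^+ 2 - g \in E -> (adjoin_degree E g <= 2)%N.
Proof.
move=> hE.
set q : {poly Om} := 'X^2 - 'X - (g ^+ 2 - g)%:P.
have qE : q \is a polyOver E.
  by rewrite /q !rpredB ?polyOverXn ?polyOverX ?polyOverC.
have rq : root q g.
  by rewrite /root /q !hornerE subrr.
have szq : size q = 3%N.
  by rewrite /q -addrA size_addl ?size_polyXn // -opprD size_polyN size_XaddC.
have q0 : q != 0 by rewrite -size_poly_eq0 szq.
have := dvdp_leq q0 (minPoly_dvdp qE rq).
by rewrite size_minPoly szq.
Qed.

Lemma adjdeg2 (E : {subfield Om}) (g : Om) :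
  g ^+ 2 - g \in E -> g \notin E -> \dim <<E; g>> = (2 * \dim E)%N.
Proof.
move=> hE gE; rewrite dim_Fadjoin; congr (_ * _)%N.
have := adjdeg_le2 hE; rewrite -adjoin_deg_eq1 in gE.
by rewrite /adjoin_degree in gE *; case: (_.-1) gE => [|[|[|]]].
Qed.

Lemma AS_descent (E : {subfield Om}) (g c b y : Om) :
  c \in E -> g ^+ 2 - g = c -> b \in E -> y \in <<E; g>>%VS -> b = y ^+ 2 - y ->
  (exists2 u, u \in E & b = u ^+ 2 - u) \/ (exists2 u, u \in E & b - c = u ^+ 2 - u).
Proof.
move=> cE hg bE yG hb.
case: (boolP (g \in E)) => gE.
  by left; exists y => //; rewrite -(Fadjoin_idP gE).
have hE : g ^+ 2 - g \in E by rewrite hg.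
set p := Fadjoin_poly E g y.
have py : p.[g] = y := Fadjoin_poly_eq yG.
have szp : (size p <= 2)%N.
  exact: leq_trans (size_Fadjoin_poly _ _ _) (adjdeg_le2 hE).
have pE := Fadjoin_polyOver E g y.
set u := p`_0; set v := p`_1.
have uE : u \in E by apply/polyOverP.
have vE : v \in E by apply/polyOverP.
have ey : y = u + v * g.
  by rewrite -py (horner_coef_wide _ szp) !big_ord_recl big_ord0 addr0 expr0 mulr1 expr1.
have eb : b = u ^+ 2 - u + v ^+ 2 * c + (v ^+ 2 - v) * g.
  rewrite hb ey.
  have -> : (u + v * g) ^+ 2 - (u + v * g) = u ^+ 2 - u + v ^+ 2 * c + (v ^+ 2 - v) * g
            + (u * v * g) *+ 2 + v ^+ 2 * (g ^+ 2 - g - c) by ring.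
  by rewrite hg subrr mulr0 addr0 -mulr_natr h2 mulr0 addr0.
have v01 : v ^+ 2 - v = 0.
  apply/eqP; apply: contraR gE => nz.
  have -> : g = (b - (u ^+ 2 - u + v ^+ 2 * c)) / (v ^+ 2 - v).
    by rewrite eb addrC addKr mulrC mulKf.
  by rewrite rpred_div // !(rpredB, rpredD, rpredM, rpredX).
have : v * (v - 1) = 0 by rewrite mulrBr mulr1 -expr2.
move/eqP; rewrite mulf_eq0 => /orP[/eqP v0|].
  left; exists u => //; rewrite eb v01 mul0r addr0 v0 expr0n /= mul0r addr0 //.
rewrite subr_eq0 => /eqP v1.
right; exists u => //; rewrite eb v01 mul0r addr0 v1 expr1n mul1r addrK //.
Qed.

Fixpoint tower (E0 : {subfield Om}) (f : nat -> Om) (k : nat) : {subfield Om} :=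
  if k is k'.+1 then <<tower E0 f k'; f k'>>%AS else E0.

Lemma tower_sub (E0 : {subfield Om}) (f : nat -> Om) k : (E0 <= tower E0 f k)%VS.
Proof.
elim: k => [|k IH] /=; first exact: subvv.
exact: subv_trans IH (subv_adjoin _ _).
Qed.

Lemma tower_mem (E0 : {subfield Om}) (f : nat -> Om) k j : (j < k)%N -> f j \in tower E0 f k.
Proof.
elim: k => [//|k IH] /=; rewrite ltnS leq_eqVlt => /orP[/eqP-> | /IH h].
  exact: memv_adjoin.
exact: subvP (subv_adjoin _ _) _ h.
Qed.

Lemma tower_le (E0 : {subfield Om}) (f : nat -> Om) k (N : {subfield Om}) :
  (E0 <= N)%VS -> (forall j, (j < k)%N -> f j \in N) -> (tower E0 f k <= N)%VS.
Proof.
move=> sE hf; elim: k hf => [|k IH] hf //=.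
apply/FadjoinP; split; last exact: hf.
by apply: IH => j hj; apply: hf; exact: ltnW.
Qed.

Lemma f2comb_set n (w : 'I_n -> Om) (c : 'I_n -> bool) j0 : c j0 = false ->
  f2comb w (fun j => c j || (j == j0)) = f2comb w c + w j0.
Proof.
move=> cj0; rewrite /f2comb (bigD1 j0) /= ?eqxx ?orbT // addrC; congr (_ + _).
apply: eq_bigl => j; case: eqP => [->|] /=; by rewrite ?cj0 ?andbF ?orbF ?andbT.
Qed.

Lemma f2comb0 n (w : 'I_n -> Om) : f2comb w (fun => false) = 0.
Proof. by rewrite /f2comb big_pred0. Qed.

Lemma sqrD2 (x y : Om) : (x + y) ^+ 2 = x ^+ 2 + y ^+ 2.
Proof. by rewrite sqrrD -mulr_natr h2 mulr0 addr0. Qed.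

Lemma wpD2 (x y : Om) : (x + y) ^+ 2 - (x + y) = (x ^+ 2 - x) + (y ^+ 2 - y).
Proof. rewrite sqrD2 opprD. ring. Qed.

Lemma wp_f2comb n (x : 'I_n -> Om) c :
  (f2comb x c) ^+ 2 - f2comb x c = f2comb (fun i => x i ^+ 2 - x i) c.
Proof.
rewrite /f2comb; apply: (big_rec2 (fun s t => t ^+ 2 - t = s)).
  by rewrite expr0n /= subr0.
by move=> i y1 y2 _ <-; rewrite wpD2.
Qed.

Section Tower.
Variables (L : {subfield Om}) (d : nat) (w gm : 'I_d -> Om).
Hypotheses (wL : forall j, w j \in L) (hgm : forall j, gm j ^+ 2 - gm j = w j).
Let f := fun k => if insub k is Some j then gm j else 0.

Lemma f_ord (j : 'I_d) : f j = gm j.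
Proof. by rewrite /f valK. Qed.

Lemma tower_wp k : (k <= d)%N -> forall b, b \in L -> in_wpL (tower L f k) b ->
   exists c : 'I_d -> bool, (forall j, c j -> (j < k)%N) /\ in_wpL L (b - f2comb w c).
Proof.
elim: k => [|k IH] hk b bL.
  move=> [y yL ->]; exists (fun => false); split=> //.
  by rewrite f2comb0 subr0; exists y.
move=> [y yT eb].
set j0 : 'I_d := Ordinal hk.
have fk : f k = gm j0 by rewrite -f_ord.
have w0T : w j0 \in tower L f k := subvP (tower_sub _ _ _) _ (wL j0).
have bT : b \in tower L f k := subvP (tower_sub _ _ _) _ bL.
rewrite /= fk in yT.
have [[u uT ebu]|[u uT ebu]] := AS_descent w0T (hgm j0) bT yT eb.
  have [c [hc hw]] := IH (ltnW hk) b bL (ex_intro2 _ _ u uT ebu).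
  by exists c; split=> // j /hc /ltnW.
have bwL : b - w j0 \in L by rewrite rpredB.
have [c [hc [z zL ez]]] := IH (ltnW hk) _ bwL (ex_intro2 _ _ u uT ebu).
have cj0 : c j0 = false by apply/negbTE; apply/negP => /hc; rewrite ltnn.
exists (fun j => c j || (j == j0)); split.
  by move=> j /orP[/hc /ltnW //|/eqP->].
exists z => //; rewrite f2comb_set // -ez; ring.
Qed.

Lemma tower_dim k : indep_modwp L w -> (k <= d)%N ->
  \dim (tower L f k) = (2 ^ k * \dim L)%N.
Proof.
move=> ind; elim: k => [|k IH] hk; first by rewrite mul1n.
set j0 : 'I_d := Ordinal hk.
have fk : f k = gm j0 by rewrite -f_ord.
rewrite /= fk adjdeg2 ?IH ?(ltnW hk) ?expnS ?mulnA //.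
  by rewrite hgm; apply: subvP (tower_sub _ _ _) _ (wL j0).
apply/negP => gT.
have [c [hc [z zL ez]]] := tower_wp (ltnW hk) (wL j0) (ex_intro2 _ _ (gm j0) gT (esym (hgm j0))).
have cj0 : c j0 = false by apply/negbTE; apply/negP => /hc; rewrite ltnn.
have := ind (fun j => c j || (j == j0)).
rewrite f2comb_set // => /(_ _ j0); rewrite eqxx orbT.
have -> : f2comb w c + w j0 = w j0 - f2comb w c by rewrite addrC opp2.
by move=> /(_ (ex_intro2 _ _ z zL ez)).
Qed.
End Tower.
End Gen.

Lemma c2 (F : fieldType) (Om : fieldExtType F) : 2 \in [pchar F] -> 2%:R = 0 :> Om.
Proof. by move=> h; rewrite -(pchar_lalg Om) in h; apply: pcharf0 h. Qed.

Section Main.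
Variables (F : fieldType) (Om : splittingFieldType F) (K L M N : {subfield Om})
  (sigma : gal_of L) (a alpha : Om) (d : nat).
Hypotheses (hc : 2 \in [pchar F]) (sKL : (K <= L)%VS) (sLM : (L <= M)%VS)
  (gKL : galois K L) (iKL : ('Gal(L / K)%g \isog Zp 3)%g)
  (hs : <[sigma]>%g = 'Gal(L / K)%g) (aL : a \in L)
  (ha : alpha ^+ 2 - alpha - a = 0) (hM : M = <<L; alpha>>%AS)
  (hN : galois_closure K M N)
  (hd : span_dim_modwp L [ffun i : 'I_3 => (sigma ^+ i)%g a] d).

Let h2 : 2%:R = 0 :> Om := c2 Om hc.
Let sMN : (M <= N)%VS. Proof. by case: hN. Qed.
Let gKN : galois K N. Proof. by case: hN. Qed.
Let sLN : (L <= N)%VS := subv_trans sLM sMN.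
Let nKL : normalField K L. Proof. by case/and3P: gKL. Qed.
Let sKLN : (K <= L <= N)%VS. Proof. by rewrite sKL sLN. Qed.
Let alN : alpha \in N.
Proof. by apply: (subvP sMN); rewrite hM; apply: memv_adjoin. Qed.
Let ha' : alpha ^+ 2 - alpha = a.
Proof. by apply/eqP; rewrite -subr_eq0 ha. Qed.

Let ord_sigma : #[sigma]%g = 3%N.
Proof. by rewrite /order hs (card_isog iKL) card_Zp. Qed.

Let galL g x : g \in 'Gal(N / K)%g -> x \in L -> g x \in L.
Proof.
by move=> gG xL; rewrite -(normalField_cast_eq sKLN nKL gG xL) memv_gal.
Qed.

Let restr g : g \in 'Gal(N / K)%g ->
  exists i : 'I_3, {in L, forall x, g x = (sigma ^+ i)%g x}.
Proof.
move=> gG.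
have : normalField_cast L g \in 'Gal(L / K)%g.
  by rewrite -(normalField_img gKN sKLN nKL); apply: mem_morphim.
rewrite -hs => /cyclePmin [i hi e]; rewrite ord_sigma in hi.
exists (Ordinal hi) => x xL /=.
by rewrite -(normalField_cast_eq sKLN nKL gG xL) e.
Qed.

Let extend (i : 'I_3) :
  exists g, g \in 'Gal(N / K)%g /\ {in L, forall x, g x = (sigma ^+ i)%g x}.
Proof.
have : (sigma ^+ i)%g \in 'Gal(L / K)%g by rewrite -hs mem_cycle.
rewrite -(normalField_img gKN sKLN nKL) => /morphimP [g gD gG e].
exists g; split => // x xL; rewrite e (normalField_cast_eq sKLN nKL gG xL) //.
Qed.

Let rootg g : g \in 'Gal(N / K)%g -> (g alpha) ^+ 2 - g alpha = g a.
Proof. by move=> _; rewrite -rmorphXn -rmorphB ha'. Qed.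

Let Tset : {set gal_of N} :=
  [set t in 'Gal(N / L)%g | [forall g in 'Gal(N / K)%g, t (g alpha) == g alpha]].

Let Tgs : group_set Tset.
Proof.
apply/group_setP; split.
  rewrite inE group1; apply/forall_inP => g _; by rewrite gal_id.
move=> x y; rewrite !inE => /andP[xH /forall_inP hx] /andP[yH /forall_inP hy].
rewrite groupM //; apply/forall_inP => g gG.
by rewrite galM ?memv_gal // (eqP (hx g gG)) (eqP (hy g gG)).
Qed.
Let TG := Group Tgs.

Let conjT t h : t \in Tset -> h \in 'Gal(N / K)%g -> (t ^ h)%g \in Tset.
Proof.
rewrite !inE => /andP[tH /forall_inP ht] hG.
rewrite memJ_norm ?tH /=; last first.
  exact: subsetP (normal_norm (normalField_normal sKLN nKL)) _ hG.
apply/forall_inP => g gG; rewrite conjgE.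
have gaN : g alpha \in N by rewrite memv_gal.
rewrite galM ?memv_gal // galM ?memv_gal //.
have -> : (h^-1)%g (g alpha) = (g * h^-1)%g alpha by rewrite galM.
rewrite (eqP (ht _ _)) ?groupM ?groupV // -galM // -mulgA mulVg mulg1 //.
Qed.

Let Tnormal : (TG <| 'Gal(N / K))%g.
Proof.
apply/andP; split.
  apply/subsetP => t; rewrite inE => /andP[tH _].
  exact: subsetP (galS N sKL) _ tH.
apply/normsP => h hG; apply/eqP; rewrite eqEcard cardJg leqnn andbT.
apply/subsetP => x; rewrite mem_conjg => /conjT /(_ hG).
by rewrite -conjgM mulVg conjg1.
Qed.

Let Ttriv t : t \in Tset -> t = 1%g.
Proof.
move=> tT.
have sMT : (M <= fixedField TG)%VS.
  rewrite hM; apply/FadjoinP; split.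
    rewrite -(galois_connection TG sLN); apply/subsetP => x.
    by rewrite inE => /andP[].
  apply/fixedFieldP => // x; rewrite inE => /andP[_ /forall_inP hx].
  by have := hx 1%g (group1 _); rewrite gal_id => /eqP.
have [_ _ minN] := hN.
have sNT := minN _ (subv_trans sMT (subvv _)) (normal_fixedField_galois gKN Tnormal).
apply/eqP/gal_eqP => x xN; rewrite gal_id.
by have [_ ->] := mem_fixedFieldP (subvP sNT x xN).
Qed.

Let eqH x y : x \in 'Gal(N / L)%g -> y \in 'Gal(N / L)%g ->
  (forall g, g \in 'Gal(N / K)%g -> x (g alpha) = y (g alpha)) -> x = y.
Proof.
move=> xH yH e; apply/eqP; rewrite eq_mulgV1; apply/eqP/Ttriv.
rewrite inE groupM ?groupV //; apply/forall_inP => g gG.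
have gaN : g alpha \in N by rewrite memv_gal.
rewrite galM ?memv_gal // e //; apply/eqP.
by have := galM y (y^-1)%g gaN; rewrite mulgV gal_id => /esym.
Qed.

Let tact t g : t \in 'Gal(N / L)%g -> g \in 'Gal(N / K)%g ->
  t (g alpha) = g alpha \/ t (g alpha) = g alpha + 1.
Proof.
move=> tH gG; apply: AS_root => //.
rewrite rootg // -rmorphXn -rmorphB rootg //.
by apply/esym; apply: (fixed_gal sLN tH); apply: galL.
Qed.

Let t1 (t : gal_of N) z : t (z + 1) = t z + 1.
Proof. by rewrite rmorphD rmorph1. Qed.

Let Habelem : (2.-abelem 'Gal(N / L))%g.
Proof.
apply/abelemP => //; split.
  apply/centsP => x xH y yH; apply: eqH; rewrite ?groupM // => g gG.
  rewrite !galM ?memv_gal //.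
  by case: (tact xH gG) => ex; case: (tact yH gG) => ey; rewrite ?ex ?ey ?t1 ?ex ?ey.
move=> x xH; apply: eqH; rewrite ?groupX ?group1 // => g gG.
rewrite expgS expg1 galM ?memv_gal // gal_id.
case: (tact xH gG) => e; rewrite e ?t1 ?e //.
by rewrite -addrA (addxx2 h2) addr0.
Qed.


Let Hcard : #|'Gal(N / L)%g| = (2 ^ d)%N.
Proof.
have [w [wL ind spw spv]] := hd.
set v := [ffun i : 'I_3 => (sigma ^+ i)%g a] in spw spv.
have [gi hgi] := fin_all_exists extend.
have hb i : (gi i alpha) ^+ 2 - gi i alpha = v i.
  by have [gG e] := hgi i; rewrite rootg // e // ffunE.
have [cw hcw] := fin_all_exists spw.
have hcw' j : exists y, y \in L /\ w j - f2comb v (cw j) = y ^+ 2 - y.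
  by have [y yL e] := hcw j; exists y.
have [yw hyw] := fin_all_exists hcw'.
pose beta i := gi i alpha.
pose gm j := f2comb beta (cw j) + yw j.
have hgm j : gm j ^+ 2 - gm j = w j.
  rewrite /gm (wpD2 h2) (wp_f2comb h2) -(proj2 (hyw j)).
  have -> : f2comb (fun i => beta i ^+ 2 - beta i) (cw j) = f2comb v (cw j).
    by apply: eq_bigr => i _; rewrite hb.
  by rewrite addrC subrK.
have gmN j : gm j \in N.
  rewrite rpredD //; last by apply: (subvP sLN); exact: (proj1 (hyw j)).
  by apply: rpred_sum => i _; apply: memv_gal.
set f := fun k => if insub k is Some j then gm j else 0.
have fo (j : 'I_d) : f j = gm j by rewrite /f valK.
set Td := tower L f d.
have sTdN : (Td <= N)%VS.
  apply: tower_le sLN _ => j hj.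
  by rewrite -[j]/(nat_of_ord (Ordinal hj)) fo.
have sLTd : (L <= Td)%VS := tower_sub L f d.
have gaT g : g \in 'Gal(N / K)%g -> g alpha \in Td.
  move=> gG; have [i hi] := restr gG.
  have [c' [z zL ez]] := spv i.
  pose s := f2comb gm c' + z.
  have hs' : s ^+ 2 - s = v i.
    rewrite /s (wpD2 h2) (wp_f2comb h2) -ez.
    have -> : f2comb (fun j => gm j ^+ 2 - gm j) c' = f2comb w c'.
      by apply: eq_bigr => j _; rewrite hgm.
    by rewrite addrC subrK.
  have sT : s \in Td.
    rewrite rpredD //; last exact: (subvP sLTd) _ zL.
    by apply: rpred_sum => j _; rewrite -fo; exact: tower_mem (ltn_ord j).
  have : s ^+ 2 - s = (g alpha) ^+ 2 - g alpha by rewrite hs' rootg // hi // ffunE.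
  by move/(AS_root h2) => [->|->] //; rewrite rpredD ?rpred1.
have sKTd : (K <= Td)%VS := subv_trans sKL sLTd.
have gTdN : galois Td N by apply: (galoisS _ gKN); rewrite sKTd sTdN.
have NTd : (N <= Td)%VS.
  move/galois_fixedField: gTdN => eTd; rewrite -eTd.
  apply/subvP => x xN; apply/fixedFieldP => // t tG.
  have : t \in Tset.
    rewrite inE (subsetP (galS N sLTd)) //=; apply/forall_inP => g gG.
    by rewrite (fixed_gal sTdN tG (gaT g gG)).
  by move/Ttriv => ->; rewrite gal_id.
have /eqP eNT : (N == Td :> {vspace Om})%VS by rewrite eqEsubv NTd sTdN.
rewrite -(galois_dim (galoisS sKLN gKN)) eNT.
by rewrite (tower_dim h2 wL hgm ind (leqnn d)) mulnK // adim_gt0.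
Qed.

Lemma main_sec : exists P Q : {group gal_of N},
    [/\ (P ><| Q)%g = 'Gal(N / K)%g,
        (2.-abelem P)%g, #|P| = (2 ^ d)%N
      & (Q \isog Zp 3)%g].
Proof.
have nsHG := normalField_normal sKLN nKL.
have cardG : #|'Gal(N / K)%g| = (2 ^ d * 3)%N.
  rewrite -(Lagrange (normal_sub nsHG)) Hcard; congr (_ * _)%N.
  rewrite -card_quotient ?normal_norm //.
  by rewrite (card_isog (normalField_isog gKN sKLN nKL)) (card_isog iKL) card_Zp.
have h3 : (3 %| #|'Gal(N / K)%g|)%N by rewrite cardG dvdn_mull.
have [x xG ox] := Cauchy (isT : prime 3) h3.
exists 'Gal(N / L)%G, <[x]>%G.
have sQG : (<[x]> \subset 'Gal(N / K))%g by rewrite cycle_subG.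
have cQ : #|<[x]>%g| = 3%N := ox.
have TI : ('Gal(N / L) :&: <[x]> = 1)%g.
  by apply: coprime_TIg; rewrite Hcard cQ coprimeXl.
split; [|exact: Habelem|exact: Hcard|].
  rewrite sdprodE //; last exact: subset_trans sQG (normal_norm nsHG).
  apply/eqP; rewrite eqEcard mul_subG ?(normal_sub nsHG) //=.
  have e := TI_cardMg TI; simpl in e; rewrite e Hcard cQ cardG.
  by rewrite leqnn.
rewrite (isog_cyclic_card _ (cycle_cyclic x)) prime_cyclic ?card_Zp ?cQ //.
Qed.
End Main.

Unset Implicit Arguments.

Theorem mainTheorem3 (F : fieldType) (Om : splittingFieldType F)
    (K L M N : {subfield Om}) (sigma : gal_of L) (a alpha : Om) (d : nat) :
  2 \in [pchar F] ->
  (K <= L)%VS -> (L <= M)%VS ->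
  galois K L -> ('Gal(L / K) \isog Zp 3)%g ->
  galois L M -> ('Gal(M / L) \isog Zp 2)%g ->
  <[sigma]>%g = 'Gal(L / K)%g ->
  a \in L -> alpha ^+ 2 - alpha - a = 0 -> M = <<L; alpha>>%AS ->
  span_dim_modwp L [ffun i : 'I_3 => (sigma ^+ i)%g a] d ->
  galois_closure K M N ->
  exists P Q : {group gal_of N},
    [/\ (P ><| Q)%g = 'Gal(N / K)%g,
        (2.-abelem P)%g, #|P| = (2 ^ d)%N
      & (Q \isog Zp 3)%g].
Proof.
move=> hc sKL sLM gKL iKL _ _ hs aL ha hM hd hN.
exact: (main_sec hc sKL sLM gKL iKL hs aL ha hM hN hd).
Qed.
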